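(* For every bounded distributive bilattice $\mathbb{B}$ (resp. bounded commutative distributive bilattice with conflation) we have $\mathbb{B}\cong(\mathbb{B}^+)_+$, and for every HBL (resp. HCBL) $\mathbb{H}$ we have $\mathbb{H}\cong(\mathbb{H}_+)^+$.
   Context: A bilattice is $(B,\le_t,\le_k,\neg)$ with $(B,\le_t)$ (operations $\wedge,\vee$) and $(B,\le_k)$ (operations $\otimes,\oplus$) lattices and $\neg$ satisfying: $a\le_tb\Rightarrow\neg b\le_t\neg a$, $a\le_kb\Rightarrow\neg a\le_k\neg b$, $\neg\neg a=a$. It is distributive if $x\circ(y\bullet z)=(x\circ y)\bullet(x\circ z)$ for all $\circ,\bullet\in\{\wedge,\vee,\otimes,\oplus\}$; bounds are $\mathtt{f},\mathtt{t}$ ($\le_t$) and $\bot,\top$ ($\le_k$). A bilattice with conflation additionally has $-$ with $a\le_tb\Rightarrow -a\le_t-b$, $a\le_kb\Rightarrow -b\le_k-a$, $--a=a$; commutative means $\neg-x=-\neg x$. Isomorphisms of bilattices (with conflation) are bijections preserving all these operations. A heterogeneous bilattice (HBL) is a tuple $(\mathbb{L}_1,\mathbb{L}_2,\mathrm{n},\mathrm{p})$ where $\mathbb{L}_i=(L_i,\sqcap_i,\sqcup_i,0_i,1_i)$ are bounded distributive lattices and $\mathrm{n}:\mathbb{L}_1\to\mathbb{L}_2$, $\mathrm{p}:\mathbb{L}_2\to\mathbb{L}_1$ are mutually inverse lattice isomorphisms. An HCBL is defined in the same way with $\mathbb{L}_i$ De Morgan algebras (negations ${\sim}_i$) and $\mathrm{n},\mathrm{p}$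 mutually inverse De Morgan algebra isomorphisms. An isomorphism $(\mathbb{L}_1,\mathbb{L}_2,\mathrm{n},\mathrm{p})\cong(\mathbb{L}_1',\mathbb{L}_2',\mathrm{n}',\mathrm{p}')$ is a pair of algebra isomorphisms $f_i:\mathbb{L}_i\to\mathbb{L}_i'$ with $f_2\circ\mathrm{n}=\mathrm{n}'\circ f_1$ and $f_1\circ\mathrm{p}=\mathrm{p}'\circ f_2$. For a bounded distributive bilattice $\mathbb{B}$, $\mathbb{B}^+$ is the HBL $(\mathbb{L}_1,\mathbb{L}_2,\mathrm{Id},\mathrm{Id})$ with $\mathbb{L}_1=\mathbb{L}_2=(\mathrm{Reg}(\mathbb{B}),\otimes,\oplus,\bot,\top)$, where $\mathrm{Reg}(\mathbb{B})=\{a\in B:a=\neg a\}$ (for a commutative bilattice with conflation, each $\mathbb{L}_i$ is also equipped with ${\sim}_i=-$ restricted to $\mathrm{Reg}(\mathbb{B})$). For an HBL $\mathbb{H}$, $\mathbb{H}_+$ is $L_1\times L_2$ with $\langle a_1,a_2\rangle\otimes\langle b_1,b_2\rangle=\langle a_1\sqcap_1b_1,a_2\sqcap_2b_2\rangle$, $\oplus$ componentwise $\sqcup$, $\langle a_1,a_2\rangle\wedge\langle b_1,b_2\rangle=\langle a_1\sqcap_1b_1,a_2\sqcup_2b_2\rangle$, $\langle a_1,a_2\rangle\vee\langle b_1,b_2\rangle=\langle a_1\sqcup_1b_1,a_2\sqcap_2b_2\rangle$, $\neg\langle a_1,a_2\rangle=\langle\mathrm{p}(a_2),\mathrm{n}(a_1)\rangle$,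 $\mathtt{f}=\langle0_1,1_2\rangle$, $\mathtt{t}=\langle1_1,0_2\rangle$, $\bot=\langle0_1,0_2\rangle$, $\top=\langle1_1,1_2\rangle$; for an HCBL also $-\langle a_1,a_2\rangle=\langle\mathrm{p}({\sim}_2a_2),\mathrm{n}({\sim}_1a_1)\rangle$. *)

(* Defs.v *)
Record is_lattice (L : Type) (m j : L -> L -> L) : Prop := {
  l_mC : forall a b, m a b = m b a;
  l_jC : forall a b, j a b = j b a;
  l_mA : forall a b c, m a (m b c) = m (m a b) c;
  l_jA : forall a b c, j a (j b c) = j (j a b) c;
  l_mj : forall a b, m a (j a b) = a;
  l_jm : forall a b, j a (m a b) = a }.

Record is_bdl (L : Type) (m j : L -> L -> L) (z o : L) : Prop := {
  bdl_lat : is_lattice L m j;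
  bdl_distr : forall a b c, m a (j b c) = j (m a b) (m a c);
  bdl_zero : forall a, m z a = z;
  bdl_one : forall a, j o a = o }.

Record is_demorgan (L : Type) (m j : L -> L -> L) (z o : L) (c : L -> L) : Prop := {
  dm_bdl : is_bdl L m j z o;
  dm_invol : forall a, c (c a) = a;
  dm_law : forall a b, c (m a b) = j (c a) (c b) }.

Record is_lat_hom (L M : Type) (mL jL : L -> L -> L) (zL oL : L)
       (mM jM : M -> M -> M) (zM oM : M) (f : L -> M) : Prop := {
  lh_meet : forall a b, f (mL a b) = mM (f a) (f b);
  lh_join : forall a b, f (jL a b) = jM (f a) (f b);
  lh_zero : f zL = zM;
  lh_one : f oL = oM }.

Record bisig := {
  carrier : Type;
  meet : carrier -> carrier -> carrier;
  join : carrier -> carrier -> carrier;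
  tens : carrier -> carrier -> carrier;
  plus : carrier -> carrier -> carrier;
  neg : carrier -> carrier;
  bff : carrier; btt : carrier; bbot : carrier; btop : carrier }.

Arguments meet {b}. Arguments join {b}. Arguments tens {b}. Arguments plus {b}.
Arguments neg {b}. Arguments bff {b}. Arguments btt {b}. Arguments bbot {b}.
Arguments btop {b}.

Definition le_t {B : bisig} (a b : carrier B) : Prop := meet a b = a.
Definition le_k {B : bisig} (a b : carrier B) : Prop := tens a b = a.

Inductive bop := OMeet | OJoin | OTens | OPlus.

Definition bapp (B : bisig) (o : bop) : carrier B -> carrier B -> carrier B :=
  match o with OMeet => meet | OJoin => join | OTens => tens | OPlus => plus end.

Record is_bdbilattice (B : bisig) : Prop := {
  bl_t : is_lattice (carrier B) meet join;
  bl_k : is_lattice (carrier B) tens plus;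
  bl_ff : forall a : carrier B, meet bff a = bff;
  bl_tt : forall a : carrier B, join btt a = btt;
  bl_bot : forall a : carrier B, tens bbot a = bbot;
  bl_top : forall a : carrier B, plus btop a = btop;
  bl_distr : forall (o1 o2 : bop) (x y z : carrier B),
      bapp B o1 x (bapp B o2 y z) = bapp B o2 (bapp B o1 x y) (bapp B o1 x z);
  bl_neg_t : forall a b : carrier B, le_t a b -> le_t (neg b) (neg a);
  bl_neg_k : forall a b : carrier B, le_k a b -> le_k (neg a) (neg b);
  bl_negK : forall a : carrier B, neg (neg a) = a }.

Record cbisig := { bs :> bisig; conf : carrier bs -> carrier bs }.

Record is_bcdbilattice_conf (B : cbisig) : Prop := {
  cb_bil : is_bdbilattice B;
  cb_conf_t : forall a b : carrier B, le_t a b -> le_t (conf B a) (conf B b);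
  cb_conf_k : forall a b : carrier B, le_k a b -> le_k (conf B b) (conf B a);
  cb_confK : forall a : carrier B, conf B (conf B a) = a;
  cb_comm : forall x : carrier B, neg (conf B x) = conf B (neg x) }.

Definition bil_iso (B C : bisig) : Prop :=
  exists (f : carrier B -> carrier C) (g : carrier C -> carrier B),
    (forall x, g (f x) = x) /\ (forall y, f (g y) = y) /\
    (forall o a b, f (bapp B o a b) = bapp C o (f a) (f b)) /\
    (forall a, f (neg a) = neg (f a)) /\
    f bff = bff /\ f btt = btt /\ f bbot = bbot /\ f btop = btop.

Definition cbil_iso (B C : cbisig) : Prop :=
  exists (f : carrier B -> carrier C) (g : carrier C -> carrier B),
    (forall x, g (f x) = x) /\ (forall y, f (g y) = y) /\
    (forall o a b, f (bapp B o a b) = bapp C o (f a) (f b)) /\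
    (forall a, f (neg a) = neg (f a)) /\
    (forall a, f (conf B a) = conf C (f a)) /\
    f bff = bff /\ f btt = btt /\ f bbot = bbot /\ f btop = btop.

Record hsig := {
  L1 : Type; L2 : Type;
  meet1 : L1 -> L1 -> L1; join1 : L1 -> L1 -> L1; zero1 : L1; one1 : L1;
  meet2 : L2 -> L2 -> L2; join2 : L2 -> L2 -> L2; zero2 : L2; one2 : L2;
  hn : L1 -> L2; hp : L2 -> L1 }.

Arguments meet1 {h}. Arguments join1 {h}. Arguments zero1 {h}. Arguments one1 {h}.
Arguments meet2 {h}. Arguments join2 {h}. Arguments zero2 {h}. Arguments one2 {h}.
Arguments hn {h}. Arguments hp {h}.

Record is_HBL (H : hsig) : Prop := {
  hbl_L1 : is_bdl (L1 H) meet1 join1 zero1 one1;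
  hbl_L2 : is_bdl (L2 H) meet2 join2 zero2 one2;
  hbl_pn : forall a : L1 H, hp (hn a) = a;
  hbl_np : forall b : L2 H, hn (hp b) = b;
  hbl_n_hom : is_lat_hom (L1 H) (L2 H) meet1 join1 zero1 one1 meet2 join2 zero2 one2 hn;
  hbl_p_hom : is_lat_hom (L2 H) (L1 H) meet2 join2 zero2 one2 meet1 join1 zero1 one1 hp }.

Record hcsig := { hsg :> hsig; dneg1 : L1 hsg -> L1 hsg; dneg2 : L2 hsg -> L2 hsg }.

Record is_HCBL (H : hcsig) : Prop := {
  hcbl_hbl : is_HBL H;
  hcbl_dm1 : is_demorgan (L1 H) meet1 join1 zero1 one1 (dneg1 H);
  hcbl_dm2 : is_demorgan (L2 H) meet2 join2 zero2 one2 (dneg2 H);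
  hcbl_n_neg : forall a, hn (dneg1 H a) = dneg2 H (hn a);
  hcbl_p_neg : forall b, hp (dneg2 H b) = dneg1 H (hp b) }.

Definition hbl_iso (H K : hsig) : Prop :=
  exists (f1 : L1 H -> L1 K) (g1 : L1 K -> L1 H) (f2 : L2 H -> L2 K) (g2 : L2 K -> L2 H),
    (forall x, g1 (f1 x) = x) /\ (forall y, f1 (g1 y) = y) /\
    (forall x, g2 (f2 x) = x) /\ (forall y, f2 (g2 y) = y) /\
    is_lat_hom (L1 H) (L1 K) meet1 join1 zero1 one1 meet1 join1 zero1 one1 f1 /\
    is_lat_hom (L2 H) (L2 K) meet2 join2 zero2 one2 meet2 join2 zero2 one2 f2 /\
    (forall a, f2 (hn a) = hn (f1 a)) /\ (forall b, f1 (hp b) = hp (f2 b)).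

Definition hcbl_iso (H K : hcsig) : Prop :=
  exists (f1 : L1 H -> L1 K) (g1 : L1 K -> L1 H) (f2 : L2 H -> L2 K) (g2 : L2 K -> L2 H),
    (forall x, g1 (f1 x) = x) /\ (forall y, f1 (g1 y) = y) /\
    (forall x, g2 (f2 x) = x) /\ (forall y, f2 (g2 y) = y) /\
    is_lat_hom (L1 H) (L1 K) meet1 join1 zero1 one1 meet1 join1 zero1 one1 f1 /\
    is_lat_hom (L2 H) (L2 K) meet2 join2 zero2 one2 meet2 join2 zero2 one2 f2 /\
    (forall a, f1 (dneg1 H a) = dneg1 K (f1 a)) /\
    (forall b, f2 (dneg2 H b) = dneg2 K (f2 b)) /\
    (forall a, f2 (hn a) = hn (f1 a)) /\ (forall b, f1 (hp b) = hp (f2 b)).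

Definition plusH (H : hsig) : bisig := {|
  carrier := (L1 H * L2 H)%type;
  meet := fun x y => (meet1 (fst x) (fst y), join2 (snd x) (snd y));
  join := fun x y => (join1 (fst x) (fst y), meet2 (snd x) (snd y));
  tens := fun x y => (meet1 (fst x) (fst y), meet2 (snd x) (snd y));
  plus := fun x y => (join1 (fst x) (fst y), join2 (snd x) (snd y));
  neg := fun x => (hp (snd x), hn (fst x));
  bff := (zero1, one2); btt := (one1, zero2);
  bbot := (zero1, zero2); btop := (one1, one2) |}.

Definition plusHC (H : hcsig) : cbisig := {|
  bs := plusH H;
  conf := fun x : L1 H * L2 H => (hp (dneg2 H (snd x)), hn (dneg1 H (fst x))) |}.

Record reg_closed (B : bisig) : Prop := {
  rc_tens : forall a b : carrier B, neg (tens a b) = tens (neg a) (neg b);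
  rc_plus : forall a b : carrier B, neg (plus a b) = plus (neg a) (neg b);
  rc_bot : neg (@bbot B) = bbot;
  rc_top : neg (@btop B) = btop }.

Definition Reg (B : bisig) : Type := { a : carrier B | a = neg a }.

Lemma reg_tens_pf (B : bisig) (R : reg_closed B) (a b : Reg B) :
  tens (proj1_sig a) (proj1_sig b) = neg (tens (proj1_sig a) (proj1_sig b)).
Proof. destruct a as [a ea], b as [b eb]; simpl. rewrite (rc_tens B R).
  rewrite <- ea, <- eb. reflexivity. Qed.
Lemma reg_plus_pf (B : bisig) (R : reg_closed B) (a b : Reg B) :
  plus (proj1_sig a) (proj1_sig b) = neg (plus (proj1_sig a) (proj1_sig b)).
Proof. destruct a as [a ea], b as [b eb]; simpl. rewrite (rc_plus B R).
  rewrite <- ea, <- eb. reflexivity. Qed.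
Lemma reg_bot_pf (B : bisig) (R : reg_closed B) : (@bbot B) = neg bbot.
Proof. rewrite (rc_bot B R). reflexivity. Qed.
Lemma reg_top_pf (B : bisig) (R : reg_closed B) : (@btop B) = neg btop.
Proof. rewrite (rc_top B R). reflexivity. Qed.

Definition reg_tens B R (a b : Reg B) : Reg B :=
  exist _ (tens (proj1_sig a) (proj1_sig b)) (reg_tens_pf B R a b).
Definition reg_plus B R (a b : Reg B) : Reg B :=
  exist _ (plus (proj1_sig a) (proj1_sig b)) (reg_plus_pf B R a b).
Definition reg_bot B R : Reg B := exist _ bbot (reg_bot_pf B R).
Definition reg_top B R : Reg B := exist _ btop (reg_top_pf B R).

Definition minusB (B : bisig) (R : reg_closed B) : hsig := {|
  L1 := Reg B; L2 := Reg B;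
  meet1 := reg_tens B R; join1 := reg_plus B R; zero1 := reg_bot B R; one1 := reg_top B R;
  meet2 := reg_tens B R; join2 := reg_plus B R; zero2 := reg_bot B R; one2 := reg_top B R;
  hn := fun x => x; hp := fun x => x |}.

Lemma reg_conf_pf (B : cbisig) (Hc : forall x : carrier B, neg (conf B x) = conf B (neg x))
  (a : Reg B) : conf B (proj1_sig a) = neg (conf B (proj1_sig a)).
Proof. destruct a as [a ea]; simpl. rewrite Hc, <- ea. reflexivity. Qed.

Definition reg_conf (B : cbisig) Hc (a : Reg B) : Reg B :=
  exist _ (conf B (proj1_sig a)) (reg_conf_pf B Hc a).

Definition minusBC (B : cbisig) (R : reg_closed B)
  (Hc : forall x : carrier B, neg (conf B x) = conf B (neg x)) : hcsig := {|
  hsg := minusB B R; dneg1 := reg_conf B Hc; dneg2 := reg_conf B Hc |}.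

Section LatFacts.
Variables (L : Type) (m j : L -> L -> L) (HL : is_lattice L m j).

Lemma lat_dual : is_lattice L j m.
Proof. destruct HL; constructor; auto. Qed.

Lemma lat_idem a : m a a = a.
Proof. transitivity (m a (j a (m a a))). rewrite (l_jm _ _ _ HL). reflexivity.
  apply (l_mj _ _ _ HL). Qed.

Lemma lat_lb1 a b : m (m a b) a = m a b.
Proof. rewrite (l_mC _ _ _ HL), (l_mA _ _ _ HL), lat_idem. reflexivity. Qed.

Lemma lat_lb2 a b : m (m a b) b = m a b.
Proof. rewrite <- (l_mA _ _ _ HL), lat_idem. reflexivity. Qed.

Lemma lat_glb a b c : m c a = c -> m c b = c -> m c (m a b) = c.
Proof. intros H1 H2. rewrite (l_mA _ _ _ HL), H1, H2. reflexivity. Qed.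

Lemma lat_le_join a b : m a b = a -> j a b = b.
Proof. intros H. rewrite <- H, (l_mC _ _ _ HL), (l_jC _ _ _ HL), (l_jm _ _ _ HL).
  reflexivity. Qed.

Lemma lat_join_le a b : j a b = b -> m a b = a.
Proof. intros H. rewrite <- H, (l_mj _ _ _ HL). reflexivity. Qed.

Lemma mono_pres_meet (f : L -> L) (invol : forall a, f (f a) = a)
  (mono : forall a b, m a b = a -> m (f a) (f b) = f a) a b :
  f (m a b) = m (f a) (f b).
Proof.
  assert (H1 : m (f (m a b)) (m (f a) (f b)) = f (m a b)).
  { apply lat_glb; apply mono; [apply lat_lb1 | apply lat_lb2]. }
  assert (Ha : m (f (m (f a) (f b))) (f (f a)) = f (m (f a) (f b)))
    by (apply mono; apply lat_lb1).
  assert (Hb : m (f (m (f a) (f b))) (f (f b)) = f (m (f a) (f b)))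
    by (apply mono; apply lat_lb2).
  rewrite invol in Ha, Hb.
  pose proof (mono _ _ (lat_glb _ _ _ Ha Hb)) as H2. rewrite invol in H2.
  rewrite <- H1, (l_mC _ _ _ HL), H2. reflexivity.
Qed.
End LatFacts.

Lemma bdbil_reg_closed (B : bisig) (HB : is_bdbilattice B) : reg_closed B.
Proof.
  pose proof (bl_k B HB) as Hk. pose proof (lat_dual _ _ _ Hk) as Hk'.
  pose proof (bl_negK B HB) as K. pose proof (bl_neg_k B HB) as M.
  unfold le_k in M.
  assert (Mp : forall a b : carrier B, plus a b = a -> plus (neg a) (neg b) = neg a).
  { intros a b H. rewrite (l_mC _ _ _ Hk') in H.
    pose proof (M _ _ (lat_join_le _ _ _ Hk _ _ H)) as H'.
    pose proof (lat_le_join _ _ _ Hk _ _ H') as H''.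
    rewrite (l_mC _ _ _ Hk'). exact H''. }
  constructor.
  - intros a b. apply (mono_pres_meet _ _ _ Hk); auto.
  - intros a b. apply (mono_pres_meet _ _ _ Hk'); auto.
  - pose proof (M _ _ (bl_bot B HB (neg bbot))) as H. rewrite K in H.
    rewrite (l_mC _ _ _ Hk), (bl_bot B HB) in H. symmetry; exact H.
  - pose proof (Mp _ _ (bl_top B HB (neg btop))) as H. rewrite K in H.
    rewrite (l_mC _ _ _ Hk'), (bl_top B HB) in H. symmetry; exact H.
Qed.

Lemma plusH_reg_closed (H : hsig) (HH : is_HBL H) : reg_closed (plusH H).
Proof.
  destruct HH as [_ _ _ _ [n1 n2 n3 n4] [p1 p2 p3 p4]].
  constructor; simpl.
  - intros [a1 a2] [b1 b2]; simpl. rewrite n1, p1. reflexivity.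
  - intros [a1 a2] [b1 b2]; simpl. rewrite n2, p2. reflexivity.
  - rewrite n3, p3. reflexivity.
  - rewrite n4, p4. reflexivity.
Qed.

Lemma plusHC_comm (H : hcsig) (HH : is_HCBL H) :
  forall x : carrier (plusHC H), neg (conf (plusHC H) x) = conf (plusHC H) (neg x).
Proof.
  destruct HH as [_ _ _ hn_neg hp_neg].
  intros [a1 a2]; simpl. f_equal; [rewrite hn_neg | rewrite hp_neg]; reflexivity.
Qed.

(* Main.v *)
Require Import Defs.
From Stdlib Require Import ProofIrrelevance.

Lemma reg_eq (B : bisig) (x y : Reg B) : proj1_sig x = proj1_sig y -> x = y.
Proof. destruct x as [x ex], y as [y ey]; simpl; intros ->. f_equal. apply proof_irrelevance. Qed.

Lemma lat_antisym L (m j : L -> L -> L) (x y : L) : m x y = x -> m y x = y -> (forall a b, m a b = m b a) -> x = y.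
Proof. intros H1 H2 C. rewrite <- H1, C. exact H2. Qed.

Lemma anti_meet L m j (HL : is_lattice L m j) (f : L -> L)
  (inv : forall a, f (f a) = a) (anti : forall a b, m a b = a -> m (f b) (f a) = f b) a b :
  f (m a b) = j (f a) (f b).
Proof.
  pose proof (l_mC _ _ _ HL) as mC. pose proof (l_jC _ _ _ HL) as jC.
  pose proof (l_jA _ _ _ HL) as jA.
  assert (lub : forall x y z, m x z = x -> m y z = y -> m (j x y) z = j x y).
  { intros x y z H1 H2. apply (lat_join_le _ _ _ HL).
    apply (lat_le_join _ _ _ HL) in H1. apply (lat_le_join _ _ _ HL) in H2.
    rewrite <- jA, H2, H1. reflexivity. }
  apply (lat_antisym L m j); [| |exact mC].
  -
    assert (Ha : m (f (j (f a) (f b))) a = f (j (f a) (f b))).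
    { pose proof (anti (f a) (j (f a) (f b)) (l_mj _ _ _ HL _ _)) as H.
      rewrite inv in H. exact H. }
    assert (Hb : m (f (j (f a) (f b))) b = f (j (f a) (f b))).
    { rewrite jC. pose proof (anti (f b) (j (f b) (f a)) (l_mj _ _ _ HL _ _)) as H.
      rewrite inv in H. exact H. }
    pose proof (anti _ _ (lat_glb _ _ _ HL _ _ _ Ha Hb)) as H. rewrite inv in H. exact H.
  - apply lub.
    + apply anti. apply (lat_lb1 _ _ _ HL).
    + apply anti. apply (lat_lb2 _ _ _ HL).
Qed.

Lemma anti_join L m j (HL : is_lattice L m j) (f : L -> L)
  (inv : forall a, f (f a) = a) (anti : forall a b, m a b = a -> m (f b) (f a) = f b) a b :
  f (j a b) = m (f a) (f b).
Proof.
  pose proof (anti_meet L m j HL f inv anti (f a) (f b)) as H.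
  rewrite !inv in H. rewrite <- H, inv. reflexivity.
Qed.

Lemma mono_join L m j (HL : is_lattice L m j) (f : L -> L)
  (inv : forall a, f (f a) = a) (mono : forall a b, m a b = a -> m (f a) (f b) = f a) a b :
  f (j a b) = j (f a) (f b).
Proof.
  apply (mono_pres_meet L j m (lat_dual _ _ _ HL)); auto.
  intros x y H. rewrite (l_jC _ _ _ HL) in H. apply (lat_join_le _ _ _ HL) in H.
  apply mono in H. apply (lat_le_join _ _ _ HL) in H. rewrite (l_jC _ _ _ HL). exact H.
Qed.


Lemma mC {B} (HB : is_bdbilattice B) (a b : carrier B) : meet a b = meet b a.
Proof. exact (l_mC _ _ _ (bl_t B HB) a b). Qed.
Lemma jC {B} (HB : is_bdbilattice B) (a b : carrier B) : join a b = join b a.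
Proof. exact (l_jC _ _ _ (bl_t B HB) a b). Qed.
Lemma kC {B} (HB : is_bdbilattice B) (a b : carrier B) : tens a b = tens b a.
Proof. exact (l_mC _ _ _ (bl_k B HB) a b). Qed.
Lemma pC {B} (HB : is_bdbilattice B) (a b : carrier B) : plus a b = plus b a.
Proof. exact (l_jC _ _ _ (bl_k B HB) a b). Qed.
Lemma kA {B} (HB : is_bdbilattice B) (a b c : carrier B) : tens a (tens b c) = tens (tens a b) c.
Proof. exact (l_mA _ _ _ (bl_k B HB) a b c). Qed.
Lemma pA {B} (HB : is_bdbilattice B) (a b c : carrier B) : plus a (plus b c) = plus (plus a b) c.
Proof. exact (l_jA _ _ _ (bl_k B HB) a b c). Qed.
Lemma jA {B} (HB : is_bdbilattice B) (a b c : carrier B) : join a (join b c) = join (join a b) c.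
Proof. exact (l_jA _ _ _ (bl_t B HB) a b c). Qed.
Lemma mA {B} (HB : is_bdbilattice B) (a b c : carrier B) : meet a (meet b c) = meet (meet a b) c.
Proof. exact (l_mA _ _ _ (bl_t B HB) a b c). Qed.
Lemma mI {B} (HB : is_bdbilattice B) (a : carrier B) : meet a a = a.
Proof. exact (lat_idem _ _ _ (bl_t B HB) a). Qed.
Lemma jI {B} (HB : is_bdbilattice B) (a : carrier B) : join a a = a.
Proof. exact (lat_idem _ _ _ (lat_dual _ _ _ (bl_t B HB)) a). Qed.
Lemma kI {B} (HB : is_bdbilattice B) (a : carrier B) : tens a a = a.
Proof. exact (lat_idem _ _ _ (bl_k B HB) a). Qed.
Lemma pI {B} (HB : is_bdbilattice B) (a : carrier B) : plus a a = a.
Proof. exact (lat_idem _ _ _ (lat_dual _ _ _ (bl_k B HB)) a). Qed.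

Lemma D {B} (HB : is_bdbilattice B) o1 o2 (x y z : carrier B) :
  bapp B o1 x (bapp B o2 y z) = bapp B o2 (bapp B o1 x y) (bapp B o1 x z).
Proof. exact (bl_distr B HB o1 o2 x y z). Qed.

Lemma opC {B} (HB : is_bdbilattice B) o (a b : carrier B) : bapp B o a b = bapp B o b a.
Proof. destruct o; simpl; [apply mC|apply jC|apply kC|apply pC]; auto. Qed.

Lemma Dr {B} (HB : is_bdbilattice B) o1 o2 (x y z : carrier B) :
  bapp B o1 (bapp B o2 y z) x = bapp B o2 (bapp B o1 y x) (bapp B o1 z x).
Proof. rewrite (opC HB o1), (D HB), !(opC HB o1 x). reflexivity. Qed.

Lemma ff_m {B} (HB : is_bdbilattice B) (a : carrier B) : meet bff a = bff.
Proof. exact (bl_ff B HB a). Qed.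
Lemma tt_j {B} (HB : is_bdbilattice B) (a : carrier B) : join btt a = btt.
Proof. exact (bl_tt B HB a). Qed.
Lemma bot_k {B} (HB : is_bdbilattice B) (a : carrier B) : tens bbot a = bbot.
Proof. exact (bl_bot B HB a). Qed.
Lemma top_p {B} (HB : is_bdbilattice B) (a : carrier B) : plus btop a = btop.
Proof. exact (bl_top B HB a). Qed.
Lemma ff_j {B} (HB : is_bdbilattice B) (a : carrier B) : join bff a = a.
Proof. apply (lat_le_join _ _ _ (bl_t B HB)). apply ff_m; auto. Qed.
Lemma bot_p {B} (HB : is_bdbilattice B) (a : carrier B) : plus bbot a = a.
Proof. apply (lat_le_join _ _ _ (bl_k B HB)). apply bot_k; auto. Qed.
Lemma tt_m {B} (HB : is_bdbilattice B) (a : carrier B) : meet btt a = a.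
Proof. rewrite (mC HB). apply (lat_join_le _ _ _ (bl_t B HB)). rewrite (jC HB). apply tt_j; auto. Qed.
Lemma top_k {B} (HB : is_bdbilattice B) (a : carrier B) : tens btop a = a.
Proof. rewrite (kC HB). apply (lat_join_le _ _ _ (bl_k B HB)). rewrite (pC HB). apply top_p; auto. Qed.
Lemma mJ {B} (HB : is_bdbilattice B) (a b : carrier B) : meet a (join a b) = a.
Proof. exact (l_mj _ _ _ (bl_t B HB) a b). Qed.
Lemma jM {B} (HB : is_bdbilattice B) (a b : carrier B) : join a (meet a b) = a.
Proof. exact (l_jm _ _ _ (bl_t B HB) a b). Qed.
Lemma kP {B} (HB : is_bdbilattice B) (a b : carrier B) : tens a (plus a b) = a.
Proof. exact (l_mj _ _ _ (bl_k B HB) a b). Qed.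
Lemma pK {B} (HB : is_bdbilattice B) (a b : carrier B) : plus a (tens a b) = a.
Proof. exact (l_jm _ _ _ (bl_k B HB) a b). Qed.

Lemma nK {B} (HB : is_bdbilattice B) (a : carrier B) : neg (neg a) = a.
Proof. exact (bl_negK B HB a). Qed.
Lemma n_meet {B} (HB : is_bdbilattice B) (a b : carrier B) : neg (meet a b) = join (neg a) (neg b).
Proof. apply (anti_meet _ _ _ (bl_t B HB)). apply nK; auto. intros x y H. apply (bl_neg_t B HB x y H). Qed.
Lemma n_join {B} (HB : is_bdbilattice B) (a b : carrier B) : neg (join a b) = meet (neg a) (neg b).
Proof. apply (anti_join _ _ _ (bl_t B HB)). apply nK; auto. intros x y H. apply (bl_neg_t B HB x y H). Qed.
Lemma n_tens {B} (HB : is_bdbilattice B) (a b : carrier B) : neg (tens a b) = tens (neg a) (neg b).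
Proof. exact (rc_tens B (bdbil_reg_closed B HB) a b). Qed.
Lemma n_plus {B} (HB : is_bdbilattice B) (a b : carrier B) : neg (plus a b) = plus (neg a) (neg b).
Proof. exact (rc_plus B (bdbil_reg_closed B HB) a b). Qed.
Lemma n_bot {B} (HB : is_bdbilattice B) : neg (@bbot B) = bbot.
Proof. exact (rc_bot B (bdbil_reg_closed B HB)). Qed.
Lemma n_top {B} (HB : is_bdbilattice B) : neg (@btop B) = btop.
Proof. exact (rc_top B (bdbil_reg_closed B HB)). Qed.

Lemma bot_meet_top {B} (HB : is_bdbilattice B) : meet (@bbot B) btop = bff.
Proof.
  assert (H1 : plus (meet (@bbot B) btop) bff = bff).
  { change (bapp B OPlus (bapp B OMeet bbot btop) bff = bff).
    rewrite (Dr HB); simpl. rewrite (bot_p HB), (top_p HB), (ff_m HB). reflexivity. }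
  apply (lat_join_le _ _ _ (bl_k B HB)) in H1.
  rewrite <- H1.
  change (bapp B OTens (bapp B OMeet bbot btop) bff = bff).
  rewrite (Dr HB); simpl. rewrite (bot_k HB), (top_k HB), (mC HB), (ff_m HB). reflexivity.
Qed.
Lemma bot_join_top {B} (HB : is_bdbilattice B) : join (@bbot B) btop = btt.
Proof.
  assert (H1 : plus (join (@bbot B) btop) btt = btt).
  { change (bapp B OPlus (bapp B OJoin bbot btop) btt = btt).
    rewrite (Dr HB); simpl. rewrite (bot_p HB), (top_p HB), (tt_j HB). reflexivity. }
  apply (lat_join_le _ _ _ (bl_k B HB)) in H1.
  rewrite <- H1.
  change (bapp B OTens (bapp B OJoin bbot btop) btt = btt).
  rewrite (Dr HB); simpl. rewrite (bot_k HB), (top_k HB), (jC HB), (tt_j HB). reflexivity.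
Qed.
Lemma n_ff {B} (HB : is_bdbilattice B) : neg (@bff B) = btt.
Proof. rewrite <- (bot_meet_top HB), (n_meet HB), (n_bot HB), (n_top HB). apply bot_join_top; auto. Qed.
Lemma n_tt {B} (HB : is_bdbilattice B) : neg (@btt B) = bff.
Proof. rewrite <- (n_ff HB), (nK HB). reflexivity. Qed.
Lemma ff_plus_tt {B} (HB : is_bdbilattice B) : plus (@bff B) btt = btop.
Proof.
  assert (H1 : join (plus (@bff B) btt) btop = btop).
  { change (bapp B OJoin (bapp B OPlus bff btt) btop = btop).
    rewrite (Dr HB); simpl. rewrite (ff_j HB), (tt_j HB), (top_p HB). reflexivity. }
  apply (lat_join_le _ _ _ (bl_t B HB)) in H1.
  rewrite <- H1.
  change (bapp B OMeet (bapp B OPlus bff btt) btop = btop).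
  rewrite (Dr HB); simpl. rewrite (ff_m HB), (tt_m HB), (pC HB), (top_p HB). reflexivity.
Qed.

Lemma PD {B} (HB : is_bdbilattice B) o (a b : carrier B) :
  join (bapp B o a b) bbot = bapp B o (join a bbot) (join b bbot).
Proof. exact (Dr HB OJoin o bbot a b). Qed.
Lemma ND {B} (HB : is_bdbilattice B) o (a b : carrier B) :
  meet (bapp B o a b) bbot = bapp B o (meet a bbot) (meet b bbot).
Proof. exact (Dr HB OMeet o bbot a b). Qed.

Lemma pos_meet_bot {B} (HB : is_bdbilattice B) (u : carrier B) : join u bbot = u -> meet u bbot = bbot.
Proof. intros H. rewrite <- H, (mC HB), (jC HB). apply mJ; auto. Qed.
Lemma neg_join_bot {B} (HB : is_bdbilattice B) (u : carrier B) : meet u bbot = u -> join u bbot = bbot.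
Proof. intros H. rewrite <- H, (jC HB), (mC HB). apply jM; auto. Qed.
Lemma posP {B} (HB : is_bdbilattice B) (a : carrier B) : join (join a bbot) bbot = join a bbot.
Proof. rewrite <- (jA HB), (jI HB). reflexivity. Qed.
Lemma negP {B} (HB : is_bdbilattice B) (a : carrier B) : meet (meet a bbot) bbot = meet a bbot.
Proof. rewrite <- (mA HB), (mI HB). reflexivity. Qed.
Lemma plus_bot {B} (HB : is_bdbilattice B) (a : carrier B) : plus a bbot = a.
Proof. rewrite (pC HB). apply bot_p; auto. Qed.
Lemma pos_tens_tt {B} (HB : is_bdbilattice B) (u : carrier B) : join u bbot = u -> tens u btt = u.
Proof.
  intros H. rewrite <- (bot_join_top HB).
  change (bapp B OTens u (bapp B OJoin bbot btop) = u). rewrite (D HB); simpl.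
  rewrite (kC HB u bbot), (bot_k HB), (kC HB), (top_k HB), (jC HB). exact H.
Qed.
Lemma neg_tens_ff {B} (HB : is_bdbilattice B) (u : carrier B) : meet u bbot = u -> tens u bff = u.
Proof.
  intros H. rewrite <- (bot_meet_top HB).
  change (bapp B OTens u (bapp B OMeet bbot btop) = u). rewrite (D HB); simpl.
  rewrite (kC HB u bbot), (bot_k HB), (kC HB), (top_k HB), (mC HB). exact H.
Qed.

Lemma C1 {B} (HB : is_bdbilattice B) (u v : carrier B) :
  join u bbot = u -> join v bbot = v -> tens u v = meet u v.
Proof.
  intros Hu Hv.
  assert (A : forall x y : carrier B, join y bbot = y -> meet x (plus x y) = x).
  { intros x y Hy.
    pose proof (D HB OPlus OMeet x bbot y) as E; simpl in E.
    rewrite (mC HB bbot y), (pos_meet_bot HB y Hy), (plus_bot HB) in E. symmetry; exact E. }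
  assert (S1 : tens (meet u v) u = meet u v).
  { apply (lat_join_le _ _ _ (bl_k B HB)).
    change (bapp B OPlus (bapp B OMeet u v) u = u). rewrite (Dr HB); simpl.
    rewrite (pI HB), (pC HB v u). apply A; auto. }
  assert (S2 : tens (meet u v) v = meet u v).
  { apply (lat_join_le _ _ _ (bl_k B HB)).
    change (bapp B OPlus (bapp B OMeet u v) v = v). rewrite (Dr HB); simpl.
    rewrite (pI HB), (mC HB), (pC HB u v). apply A; auto. }
  assert (T1 : tens (meet u v) (tens u v) = meet u v).
  { rewrite (kA HB), S1, S2. reflexivity. }
  assert (T2 : tens (tens u v) (meet u v) = tens u v).
  { change (bapp B OTens (tens u v) (bapp B OMeet u v) = tens u v). rewrite (D HB); simpl.
    assert (E1 : tens (tens u v) u = tens u v) by (rewrite (kC HB (tens u v) u), (kA HB), (kI HB); reflexivity).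
    assert (E2 : tens (tens u v) v = tens u v) by (rewrite <- (kA HB), (kI HB); reflexivity).
    rewrite E1, E2, (mI HB). reflexivity. }
  rewrite <- T2, (kC HB), T1. reflexivity.
Qed.

Lemma C1' {B} (HB : is_bdbilattice B) (u v : carrier B) :
  join u bbot = u -> join v bbot = v -> plus u v = join u v.
Proof.
  intros Hu Hv.
  assert (A : forall x y : carrier B, join x bbot = x -> join (tens x y) x = x).
  { intros x y Hx. apply (lat_le_join _ _ _ (bl_t B HB)).
    pose proof (D HB OTens OMeet x y btt) as E; simpl in E.
    rewrite (mC HB y btt), (tt_m HB), (pos_tens_tt HB x Hx) in E. symmetry; exact E. }
  assert (S1 : tens u (join u v) = u).
  { rewrite (kC HB).
    change (bapp B OTens (bapp B OJoin u v) u = u). rewrite (Dr HB); simpl.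
    rewrite (kI HB), (jC HB), (kC HB). apply A; auto. }
  assert (S2 : tens v (join u v) = v).
  { rewrite (kC HB).
    change (bapp B OTens (bapp B OJoin u v) v = v). rewrite (Dr HB); simpl.
    rewrite (kI HB), (kC HB u v). apply A; auto. }
  apply (lat_le_join _ _ _ (bl_k B HB)) in S1.
  apply (lat_le_join _ _ _ (bl_k B HB)) in S2.
  assert (T1 : plus (plus u v) (join u v) = join u v).
  { rewrite <- (pA HB), S2, S1. reflexivity. }
  assert (T2 : plus (join u v) (plus u v) = plus u v).
  { change (bapp B OPlus (bapp B OJoin u v) (plus u v) = plus u v). rewrite (Dr HB); simpl.
    rewrite (pA HB), (pI HB), (pC HB u v), (pA HB), (pI HB), (pC HB v u), (jI HB). reflexivity. }
  rewrite <- T2, (pC HB), T1. reflexivity.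
Qed.

Lemma neg_to_pos {B} (HB : is_bdbilattice B) (u : carrier B) : meet u bbot = u -> join (neg u) bbot = neg u.
Proof. intros H. rewrite <- (n_bot HB), <- (n_meet HB), H. reflexivity. Qed.

Lemma C2 {B} (HB : is_bdbilattice B) (u v : carrier B) :
  meet u bbot = u -> meet v bbot = v -> tens u v = join u v.
Proof.
  intros Hu Hv. rewrite <- (nK HB (tens u v)), (n_tens HB), (C1 HB _ _ (neg_to_pos HB u Hu) (neg_to_pos HB v Hv)),
    (n_meet HB), !(nK HB). reflexivity.
Qed.
Lemma C2' {B} (HB : is_bdbilattice B) (u v : carrier B) :
  meet u bbot = u -> meet v bbot = v -> plus u v = meet u v.
Proof.
  intros Hu Hv. rewrite <- (nK HB (plus u v)), (n_plus HB), (C1' HB _ _ (neg_to_pos HB u Hu) (neg_to_pos HB v Hv)),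
    (n_join HB), !(nK HB). reflexivity.
Qed.

Definition Gf {B : bisig} (x1 x2 : carrier B) : carrier B := plus (join x1 bbot) (meet x2 bbot).

Lemma PG {B} (HB : is_bdbilattice B) (x1 x2 : carrier B) : join (Gf x1 x2) bbot = join x1 bbot.
Proof.
  unfold Gf. change (join (bapp B OPlus (join x1 bbot) (meet x2 bbot)) bbot = join x1 bbot).
  rewrite (PD HB); simpl. rewrite (posP HB), (neg_join_bot HB _ (negP HB x2)), (plus_bot HB). reflexivity.
Qed.
Lemma NG {B} (HB : is_bdbilattice B) (x1 x2 : carrier B) : meet (Gf x1 x2) bbot = meet x2 bbot.
Proof.
  unfold Gf. change (meet (bapp B OPlus (join x1 bbot) (meet x2 bbot)) bbot = meet x2 bbot).
  rewrite (ND HB); simpl. rewrite (negP HB), (pos_meet_bot HB _ (posP HB x1)), (bot_p HB). reflexivity.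
Qed.
Lemma I1 {B} (HB : is_bdbilattice B) (a : carrier B) : Gf a a = a.
Proof.
  unfold Gf. change (bapp B OPlus (bapp B OJoin a bbot) (meet a bbot) = a).
  rewrite (Dr HB); simpl. rewrite (bot_p HB).
  pose proof (D HB OPlus OMeet a a bbot) as E; simpl in E. rewrite E, (pI HB), (plus_bot HB), (mI HB).
  apply jM; auto.
Qed.
Lemma Sep {B} (HB : is_bdbilattice B) (x y : carrier B) :
  join x bbot = join y bbot -> meet x bbot = meet y bbot -> x = y.
Proof. intros H1 H2. rewrite <- (I1 HB x), <- (I1 HB y). unfold Gf. rewrite H1, H2. reflexivity. Qed.

Lemma negPj {B} (HB : is_bdbilattice B) (z : carrier B) : join (neg z) bbot = neg (meet z bbot).
Proof. rewrite (n_meet HB), (n_bot HB). reflexivity. Qed.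
Lemma negNm {B} (HB : is_bdbilattice B) (z : carrier B) : meet (neg z) bbot = neg (join z bbot).
Proof. rewrite (n_join HB), (n_bot HB). reflexivity. Qed.

Lemma nG {B} (HB : is_bdbilattice B) (x y : carrier B) : neg (Gf x y) = Gf (neg y) (neg x).
Proof. unfold Gf. rewrite (n_plus HB), (n_join HB), (n_meet HB), (n_bot HB), (pC HB). reflexivity. Qed.
Lemma regP {B} (HB : is_bdbilattice B) (a : carrier B) : Gf a (neg a) = neg (Gf a (neg a)).
Proof. rewrite (nG HB), (nK HB). reflexivity. Qed.
Lemma regN {B} (HB : is_bdbilattice B) (a : carrier B) : Gf (neg a) a = neg (Gf (neg a) a).
Proof. rewrite (nG HB), (nK HB). reflexivity. Qed.

Definition fB {B} (HB : is_bdbilattice B) (R : reg_closed B) (a : carrier B) : carrier (plusH (minusB B R)) :=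
  (exist _ (Gf a (neg a)) (regP HB a), exist _ (Gf (neg a) a) (regN HB a)).
Definition gB {B} (R : reg_closed B) (x : carrier (plusH (minusB B R))) : carrier B :=
  Gf (proj1_sig (fst x)) (proj1_sig (snd x)).

Lemma gf {B} (HB : is_bdbilattice B) R (a : carrier B) : gB R (fB HB R a) = a.
Proof.
  unfold gB, fB; simpl. apply (Sep HB).
  - rewrite !(PG HB). reflexivity.
  - rewrite (NG HB), (NG HB). reflexivity.
Qed.

Lemma fg {B} (HB : is_bdbilattice B) R (y : carrier (plusH (minusB B R))) : fB HB R (gB R y) = y.
Proof.
  destruct y as [[y1 e1] [y2 e2]]. unfold fB, gB; simpl. f_equal; apply reg_eq; simpl; apply (Sep HB).
  - rewrite !(PG HB). reflexivity.
  - rewrite (NG HB), (negNm HB), (PG HB), <- (negNm HB), <- e1. reflexivity.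
  - rewrite (PG HB), (negPj HB), (NG HB), <- (negPj HB), <- e2. reflexivity.
  - rewrite !(NG HB). reflexivity.
Qed.

Lemma ginj {B} (HB : is_bdbilattice B) R (x y : carrier (plusH (minusB B R))) : gB R x = gB R y -> x = y.
Proof. intros H. rewrite <- (fg HB R x), <- (fg HB R y), H. reflexivity. Qed.

Lemma PDm {B} (HB : is_bdbilattice B) (a b : carrier B) : join (meet a b) bbot = meet (join a bbot) (join b bbot).
Proof. exact (PD HB OMeet a b). Qed.
Lemma PDj {B} (HB : is_bdbilattice B) (a b : carrier B) : join (join a b) bbot = join (join a bbot) (join b bbot).
Proof. exact (PD HB OJoin a b). Qed.
Lemma PDk {B} (HB : is_bdbilattice B) (a b : carrier B) : join (tens a b) bbot = tens (join a bbot) (join b bbot).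
Proof. exact (PD HB OTens a b). Qed.
Lemma PDp {B} (HB : is_bdbilattice B) (a b : carrier B) : join (plus a b) bbot = plus (join a bbot) (join b bbot).
Proof. exact (PD HB OPlus a b). Qed.
Lemma NDm {B} (HB : is_bdbilattice B) (a b : carrier B) : meet (meet a b) bbot = meet (meet a bbot) (meet b bbot).
Proof. exact (ND HB OMeet a b). Qed.
Lemma NDj {B} (HB : is_bdbilattice B) (a b : carrier B) : meet (join a b) bbot = join (meet a bbot) (meet b bbot).
Proof. exact (ND HB OJoin a b). Qed.
Lemma NDk {B} (HB : is_bdbilattice B) (a b : carrier B) : meet (tens a b) bbot = tens (meet a bbot) (meet b bbot).
Proof. exact (ND HB OTens a b). Qed.
Lemma NDp {B} (HB : is_bdbilattice B) (a b : carrier B) : meet (plus a b) bbot = plus (meet a bbot) (meet b bbot).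
Proof. exact (ND HB OPlus a b). Qed.

Lemma ghom {B} (HB : is_bdbilattice B) R o (x y : carrier (plusH (minusB B R))) :
  gB R (bapp _ o x y) = bapp B o (gB R x) (gB R y).
Proof.
  destruct x as [[x1 e1] [x2 e2]], y as [[y1 f1] [y2 f2]].
  destruct o; unfold gB; simpl; apply (Sep HB);
    rewrite ?(PG HB), ?(NG HB), ?(PDm HB), ?(PDj HB), ?(PDk HB), ?(PDp HB),
      ?(NDm HB), ?(NDj HB), ?(NDk HB), ?(NDp HB), ?(PG HB), ?(NG HB); try reflexivity.
  - apply (C1 HB); apply posP; auto.
  - apply (C2' HB); apply negP; auto.
  - apply (C1' HB); apply posP; auto.
  - apply (C2 HB); apply negP; auto.
Qed.

Lemma fhom {B} (HB : is_bdbilattice B) R o (a b : carrier B) :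
  fB HB R (bapp B o a b) = bapp (plusH (minusB B R)) o (fB HB R a) (fB HB R b).
Proof. apply (ginj HB R). rewrite (ghom HB), !(gf HB). reflexivity. Qed.

Lemma fneg {B} (HB : is_bdbilattice B) R (a : carrier B) :
  fB HB R (neg a) = neg (fB HB R a).
Proof. apply (ginj HB R). unfold gB, fB; simpl. rewrite (nK HB). reflexivity. Qed.

Lemma fconsts {B} (HB : is_bdbilattice B) R :
  fB HB R bff = bff /\ fB HB R btt = btt /\ fB HB R bbot = bbot /\ fB HB R btop = btop.
Proof.
  unfold fB; simpl; repeat split; f_equal; apply reg_eq; simpl; unfold Gf;
  rewrite ?(n_ff HB), ?(n_tt HB), ?(n_bot HB), ?(n_top HB).
  all: rewrite ?(tt_j HB), ?(ff_m HB), ?(ff_j HB), ?(tt_m HB), ?(jI HB), ?(mI HB), ?(pI HB).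
  all: rewrite ?(jC HB btop bbot), ?(mC HB btop bbot), ?(bot_join_top HB), ?(bot_meet_top HB).
  all: rewrite ?(pC HB btt bff), ?(ff_plus_tt HB); reflexivity.
Qed.

Lemma c_plus (B : cbisig) (HB : is_bcdbilattice_conf B) (a b : carrier B) :
  conf B (plus a b) = tens (conf B a) (conf B b).
Proof. apply (anti_join _ _ _ (bl_k B (cb_bil B HB))). apply (cb_confK B HB).
  intros x y H. apply (cb_conf_k B HB x y H). Qed.
Lemma c_meet (B : cbisig) (HB : is_bcdbilattice_conf B) (a b : carrier B) :
  conf B (meet a b) = meet (conf B a) (conf B b).
Proof. apply (mono_pres_meet _ _ _ (bl_t B (cb_bil B HB))). apply (cb_confK B HB).
  intros x y H. apply (cb_conf_t B HB x y H). Qed.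
Lemma c_join (B : cbisig) (HB : is_bcdbilattice_conf B) (a b : carrier B) :
  conf B (join a b) = join (conf B a) (conf B b).
Proof. apply (mono_join _ _ _ (bl_t B (cb_bil B HB))). apply (cb_confK B HB).
  intros x y H. apply (cb_conf_t B HB x y H). Qed.
Lemma c_bot (B : cbisig) (HB : is_bcdbilattice_conf B) : conf B (@bbot B) = btop.
Proof.
  pose proof (cb_conf_k B HB bbot (conf B btop) (bl_bot B (cb_bil B HB) _)) as H.
  unfold le_k in H. rewrite (cb_confK B HB), (top_k (cb_bil B HB)) in H. exact H.
Qed.

Lemma gconf (B : cbisig) (HB : is_bcdbilattice_conf B) (x1 x2 : carrier B) :
  Gf (conf B x2) (conf B x1) = conf B (Gf x1 x2).
Proof.
  pose proof (cb_bil B HB) as H.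
  unfold Gf at 2. rewrite (c_plus B HB), (c_join B HB), (c_meet B HB), (c_bot B HB).
  apply (Sep H).
  - rewrite (PG H), (PDk H), <- (jA H), (jC H btop bbot), (bot_join_top H). rewrite (jC H (conf B x1) btt), (tt_j H).
    pose proof (Dr H OJoin OMeet bbot (conf B x2) btop) as E; simpl in E. rewrite E.
    rewrite (jC H btop bbot), (bot_join_top H), (mC H), (tt_m H), (kC H).
    symmetry. apply (pos_tens_tt H). apply posP; auto.
  - rewrite (NG H), (NDk H), <- (mA H), (mC H btop bbot), (bot_meet_top H), (mC H _ bff), (ff_m H).
    pose proof (Dr H OMeet OJoin bbot (conf B x1) btop) as E; simpl in E. rewrite E.
    rewrite (mC H btop bbot), (bot_meet_top H), (jC H), (ff_j H).
    symmetry. apply (neg_tens_ff H). apply negP; auto.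
Qed.

Lemma part1 : forall (B : bisig) (HB : is_bdbilattice B),
      bil_iso B (plusH (minusB B (bdbil_reg_closed B HB))).
Proof.
  intros B HB. set (R := bdbil_reg_closed B HB).
  exists (fB HB R), (gB R).
  split; [intro; apply gf; auto|].
  split; [intro; apply fg; auto|].
  split; [intros; apply fhom; auto|].
  split; [intros; apply fneg; auto|].
  apply fconsts.
Qed.

Lemma part2 : forall (B : cbisig) (HB : is_bcdbilattice_conf B),
      cbil_iso B
        (plusHC (minusBC B (bdbil_reg_closed B (cb_bil B HB)) (cb_comm B HB))).
Proof.
  intros B HB. pose proof (cb_bil B HB) as H. set (R := bdbil_reg_closed B (cb_bil B HB)).
  exists (fB H R), (gB R).
  split; [intro; apply gf; auto|].
  split; [intro; apply fg; auto|].
  split; [intros; apply fhom; auto|].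
  split; [intros; apply fneg; auto|].
  split; [|apply fconsts].
  intros a. apply (ginj H R). rewrite (gf H).
  unfold gB at 1, fB; simpl. rewrite (gconf B HB).
  change (Gf (Gf a (neg a)) (Gf (neg a) a)) with (gB R (fB H R a)). rewrite (gf H). reflexivity.
Qed.

Lemma f1pf (H : hsig) (HH : is_HBL H) (a : L1 H) :
  ((a, hn a) : carrier (plusH H)) = neg ((a, hn a) : carrier (plusH H)).
Proof. simpl. rewrite (hbl_pn H HH). reflexivity. Qed.
Lemma f2pf (H : hsig) (HH : is_HBL H) (b : L2 H) :
  ((hp b, b) : carrier (plusH H)) = neg ((hp b, b) : carrier (plusH H)).
Proof. simpl. rewrite (hbl_np H HH). reflexivity. Qed.

Definition F1 (H : hsig) (HH : is_HBL H) (a : L1 H) : Reg (plusH H) := exist _ (a, hn a) (f1pf H HH a).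
Definition F2 (H : hsig) (HH : is_HBL H) (b : L2 H) : Reg (plusH H) := exist _ (hp b, b) (f2pf H HH b).

Lemma part3_gen (H : hsig) (HH : is_HBL H) (R : reg_closed (plusH H)) :
  exists (f1 : L1 H -> L1 (minusB (plusH H) R)) (g1 : L1 (minusB (plusH H) R) -> L1 H)
         (f2 : L2 H -> L2 (minusB (plusH H) R)) (g2 : L2 (minusB (plusH H) R) -> L2 H),
    (forall x, g1 (f1 x) = x) /\ (forall y, f1 (g1 y) = y) /\
    (forall x, g2 (f2 x) = x) /\ (forall y, f2 (g2 y) = y) /\
    is_lat_hom (L1 H) (L1 (minusB (plusH H) R)) meet1 join1 zero1 one1 meet1 join1 zero1 one1 f1 /\
    is_lat_hom (L2 H) (L2 (minusB (plusH H) R)) meet2 join2 zero2 one2 meet2 join2 zero2 one2 f2 /\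
    (forall a, f2 (hn a) = hn (f1 a)) /\ (forall b, f1 (hp b) = hp (f2 b)) /\
    f1 = F1 H HH /\ f2 = F2 H HH.
Proof.
  pose proof HH as [h1 h2 pn np [n1 n2 n3 n4] [p1 p2 p3 p4]].
  exists (F1 H HH), (fun r => fst (proj1_sig r)), (F2 H HH), (fun r => snd (proj1_sig r)).
  repeat split.
  - intros [[y1 y2] e]. apply reg_eq. simpl. simpl in e. injection e as e1 e2. rewrite <- e2. reflexivity.
  - intros [[y1 y2] e]. apply reg_eq. simpl. simpl in e. injection e as e1 e2. rewrite <- e1. reflexivity.
  - intros a b; apply reg_eq; simpl; rewrite n1; reflexivity.
  - intros a b; apply reg_eq; simpl; rewrite n2; reflexivity.
  - apply reg_eq; simpl; rewrite n3; reflexivity.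
  - apply reg_eq; simpl; rewrite n4; reflexivity.
  - intros a b; apply reg_eq; simpl; rewrite p1; reflexivity.
  - intros a b; apply reg_eq; simpl; rewrite p2; reflexivity.
  - apply reg_eq; simpl; rewrite p3; reflexivity.
  - apply reg_eq; simpl; rewrite p4; reflexivity.
  - intros a; apply reg_eq; simpl; rewrite pn; reflexivity.
  - intros b; apply reg_eq; simpl; rewrite np; reflexivity.
  all: reflexivity.
Qed.

Lemma part3 : forall (H : hsig) (HH : is_HBL H),
      hbl_iso H (minusB (plusH H) (plusH_reg_closed H HH)).
Proof.
  intros H HH. destruct (part3_gen H HH (plusH_reg_closed H HH)) as (f1 & g1 & f2 & g2 & A & B & C & D & E & F & G & I & _).
  exists f1, g1, f2, g2. tauto.
Qed.

Lemma part4 : forall (H : hcsig) (HH : is_HCBL H),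
      hcbl_iso H
        (minusBC (plusHC H) (plusH_reg_closed H (hcbl_hbl H HH)) (plusHC_comm H HH)).
Proof.
  intros H HH.
  destruct (part3_gen H (hcbl_hbl H HH) (plusH_reg_closed H (hcbl_hbl H HH)))
    as (f1 & g1 & f2 & g2 & A & B & C & D & E & F & G & I & -> & ->).
  exists (F1 H (hcbl_hbl H HH)), g1, (F2 H (hcbl_hbl H HH)), g2.
  pose proof (hbl_pn H (hcbl_hbl H HH)) as pn. pose proof (hbl_np H (hcbl_hbl H HH)) as np.
  refine (conj A (conj B (conj C (conj D (conj E (conj F (conj _ (conj _ (conj G I))))))))).
  - intros a. apply reg_eq; simpl. rewrite (hcbl_p_neg H HH), pn. reflexivity.
  - intros b. apply reg_eq; simpl. rewrite (hcbl_n_neg H HH), np. reflexivity.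
Qed.

Theorem mainTheorem9 :
  (forall (B : bisig) (HB : is_bdbilattice B),
      bil_iso B (plusH (minusB B (bdbil_reg_closed B HB))))
  /\
  (forall (B : cbisig) (HB : is_bcdbilattice_conf B),
      cbil_iso B
        (plusHC (minusBC B (bdbil_reg_closed B (cb_bil B HB)) (cb_comm B HB))))
  /\
  (forall (H : hsig) (HH : is_HBL H),
      hbl_iso H (minusB (plusH H) (plusH_reg_closed H HH)))
  /\
  (forall (H : hcsig) (HH : is_HCBL H),
      hcbl_iso H
        (minusBC (plusHC H) (plusH_reg_closed H (hcbl_hbl H HH)) (plusHC_comm H HH))).
Proof.
  exact (conj part1 (conj part2 (conj part3 part4))).
Qed.
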